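(* Under the setup in the context, let $H_n\equiv(n\hat\sigma_{2sls}^2)^{-1}(\hat\beta_{ols}-\hat\beta_{2sls})^\top(Y_1^\top M_{Z_1}Y_1)(\hat\beta_{ols}-\hat\beta_{2sls})$. Then \[ \hat\sigma_u^2=\hat\sigma_{ols}^2\Big(1-\frac{t_{H_1}}{n}\Big)=\hat\sigma_{2sls}^2\Big(1-\frac{t_{H_2}}{n}-H_n\Big). \]
   Context: Data: $Y_1$ is an $n\times k_1$ matrix, $Y_2$ an $n\times 1$ vector, $Z_1$ an $n\times p_1$ matrix, $Z_2$ an $n\times p_2$ matrix, all real; $Z\equiv(Z_1,Z_2)$ and $X\equiv(Y_1,Z_1)$. For a matrix $A$ with $A^\top A$ nonsingular, $P_A\equiv A(A^\top A)^{-1}A^\top$ and $M_A\equiv I_n-P_A$. Standing assumptions: $Z^\top Z$, $X^\top X$, $X^\top P_Z X$ and $(X,\hat V)^\top(X,\hat V)$ are nonsingular, where $\hat V\equiv M_Z Y_1$. Define $\hat Y_1\equiv P_Z Y_1$, $\hat\theta_{ols}\equiv(X^\top X)^{-1}X^\top Y_2$, $\hat\theta_{2sls}\equiv(X^\top P_ZX)^{-1}X^\top P_Z Y_2$, and let $\hat\beta_{ols},\hat\beta_{2sls}$ be the leading $k_1\times1$ subvectors of $\hat\theta_{ols},\hat\theta_{2sls}$. Define $(\hat\theta_{cf}^\top,\hat\rho_{cf}^\top)^\top\equiv((X,\hat V)^\top(X,\hat V))^{-1}(X,\hat V)^\top Y_2$, $\hat\sigma_u^2\equiv n^{-1}\|Y_2-X\hat\theta_{cf}-\hat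 V\hat\rho_{cf}\|^2$, $\hat\sigma_{ols}^2\equiv n^{-1}\|Y_2-X\hat\theta_{ols}\|^2$, $\hat\sigma_{2sls}^2\equiv n^{-1}\|Y_2-X\hat\theta_{2sls}\|^2$; these three are assumed strictly positive. For scalars $s_1^2,s_2^2>0$ such that the matrix below is nonsingular, $t_{H,n}(s_1^2,s_2^2)\equiv(\hat\beta_{ols}-\hat\beta_{2sls})^\top\big(s_1^2(\hat Y_1^\top M_{Z_1}\hat Y_1)^{-1}-s_2^2(Y_1^\top M_{Z_1}Y_1)^{-1}\big)^{-1}(\hat\beta_{ols}-\hat\beta_{2sls})$, and $t_{H_1}\equiv t_{H,n}(\hat\sigma_{ols}^2,\hat\sigma_{ols}^2)$, $t_{H_2}\equiv t_{H,n}(\hat\sigma_{2sls}^2,\hat\sigma_{2sls}^2)$. *)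

(* Defs.v *)
From HB Require Import structures.
From mathcomp Require Import all_boot all_order all_algebra.
Set Implicit Arguments. Unset Strict Implicit. Unset Printing Implicit Defensive.
Import Order.TTheory GRing.Theory Num.Theory.
Local Open Scope ring_scope.

Section Defs.
Variable R : realFieldType.

Definition projmx n m (A : 'M[R]_(n, m)) : 'M[R]_n :=
  A *m invmx (A^T *m A) *m A^T.
Definition annmx n m (A : 'M[R]_(n, m)) : 'M[R]_n := 1%:M - projmx A.

Definition sqnorm n (v : 'cV[R]_n) : R := \sum_(i < n) (v i 0) ^+ 2.

Variables (n k1 p1 p2 : nat).
Variables (Y1 : 'M[R]_(n, k1)) (Y2 : 'cV[R]_n)
          (Z1 : 'M[R]_(n, p1)) (Z2 : 'M[R]_(n, p2)).

Definition Zmat : 'M[R]_(n, p1 + p2) := row_mx Z1 Z2.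
Definition Xmat : 'M[R]_(n, k1 + p1) := row_mx Y1 Z1.
Definition Vhat : 'M[R]_(n, k1) := annmx Zmat *m Y1.
Definition Y1hat : 'M[R]_(n, k1) := projmx Zmat *m Y1.

Definition theta_ols : 'cV[R]_(k1 + p1) :=
  invmx (Xmat^T *m Xmat) *m Xmat^T *m Y2.
Definition theta_2sls : 'cV[R]_(k1 + p1) :=
  invmx (Xmat^T *m projmx Zmat *m Xmat) *m Xmat^T *m projmx Zmat *m Y2.
Definition beta_ols : 'cV[R]_k1 := usubmx theta_ols.
Definition beta_2sls : 'cV[R]_k1 := usubmx theta_2sls.

Definition XV : 'M[R]_(n, (k1 + p1) + k1) := row_mx Xmat Vhat.
Definition coef_cf : 'cV[R]_((k1 + p1) + k1) := invmx (XV^T *m XV) *m XV^T *m Y2.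
Definition theta_cf : 'cV[R]_(k1 + p1) := usubmx coef_cf.
Definition rho_cf : 'cV[R]_k1 := dsubmx coef_cf.

Definition sigma2_u : R :=
  (n%:R)^-1 * sqnorm (Y2 - Xmat *m theta_cf - Vhat *m rho_cf).
Definition sigma2_ols : R := (n%:R)^-1 * sqnorm (Y2 - Xmat *m theta_ols).
Definition sigma2_2sls : R := (n%:R)^-1 * sqnorm (Y2 - Xmat *m theta_2sls).

Definition tH_mid (s1 s2 : R) : 'M[R]_k1 :=
  s1 *: invmx (Y1hat^T *m annmx Z1 *m Y1hat) - s2 *: invmx (Y1^T *m annmx Z1 *m Y1).

Definition tH (s1 s2 : R) : R :=
  ((beta_ols - beta_2sls)^T *m invmx (tH_mid s1 s2) *m (beta_ols - beta_2sls)) 0 0.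

Definition tH1 : R := tH sigma2_ols sigma2_ols.
Definition tH2 : R := tH sigma2_2sls sigma2_2sls.

Definition Hn : R :=
  (n%:R * sigma2_2sls)^-1 *
  ((beta_ols - beta_2sls)^T *m (Y1^T *m annmx Z1 *m Y1) *m (beta_ols - beta_2sls)) 0 0.

End Defs.

(* Main.v *)
Require Import Defs.
From HB Require Import structures.
From mathcomp Require Import all_boot all_order all_algebra.
Import Order.TTheory GRing.Theory Num.Theory.
From mathcomp Require Import ring lra.
Local Open Scope ring_scope.
Set Implicit Arguments. Unset Strict Implicit. Unset Printing Implicit Defensive.

Section Gen.
Variable R : realFieldType.

Lemma rowsq_eq0 m (u : 'rV[R]_m) : (u *m u^T) 0 0 = 0 -> u = 0.
Proof.
rewrite mxE => H; apply/rowP => j; rewrite mxE.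
rewrite /= in H.
have H2 : \sum_(j0 < m) u 0 j0 ^+ 2 = 0.
  by rewrite -[RHS]H; apply: eq_bigr => i _; rewrite mxE expr2.
have := psumr_eq0P (fun i _ => sqr_ge0 (u 0 i)) H2 (i:=j) isT.
by move/eqP; rewrite sqrf_eq0 => /eqP.
Qed.

Lemma gram_unit n m (G : 'M[R]_(n, m)) :
  (forall w : 'cV_m, G *m w = 0 -> w = 0) -> G^T *m G \in unitmx.
Proof.
move=> HG; rewrite -row_free_unit; apply: inj_row_free => v Hv.
have Hu : (v *m G^T) *m (v *m G^T)^T = 0.
  by rewrite trmx_mul trmxK !mulmxA -(mulmxA v) Hv !mul0mx.
have /rowsq_eq0 Hu0 : ((v *m G^T) *m (v *m G^T)^T) 0 0 = 0 by rewrite Hu mxE.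
have : G *m v^T = 0 by rewrite -[G]trmxK -trmx_mul Hu0 trmx0.
by move/HG => /(congr1 trmx); rewrite trmxK trmx0.
Qed.

Lemma gram_inj n m (G : 'M[R]_(n, m)) (w : 'cV_m) :
  G^T *m G \in unitmx -> G *m w = 0 -> w = 0.
Proof.
move=> U H; rewrite -[w]mul1mx -(mulVmx U) -mulmxA -mulmxA H.
by rewrite mulmx0 mulmx0.
Qed.

Lemma invmx_eq n (A B : 'M[R]_n) : A *m B = 1%:M -> invmx A = B.
Proof.
move=> H; have [UA _] := mulmx1_unit H.
by rewrite -[invmx A]mulmx1 -H mulmxA mulVmx // mul1mx.
Qed.

Lemma projT n m (G : 'M[R]_(n, m)) : (projmx G)^T = projmx G.
Proof. by rewrite /projmx !trmx_mul trmx_inv trmx_mul trmxK mulmxA. Qed.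

Lemma annT n m (G : 'M[R]_(n, m)) : (annmx G)^T = annmx G.
Proof. by rewrite /annmx raddfB /= trmx1 projT. Qed.

Lemma projG n m (G : 'M[R]_(n, m)) : G^T *m G \in unitmx -> projmx G *m G = G.
Proof. by move=> U; rewrite /projmx -!mulmxA mulVmx // mulmx1. Qed.

Lemma projP n m (G : 'M[R]_(n, m)) : G^T *m G \in unitmx ->
  projmx G *m projmx G = projmx G.
Proof. by move=> U; rewrite {1}/projmx !mulmxA projG // /projmx. Qed.

Lemma annG n m (G : 'M[R]_(n, m)) : G^T *m G \in unitmx -> annmx G *m G = 0.
Proof. by move=> U; rewrite /annmx mulmxBl mul1mx projG // subrr. Qed.

Lemma annP n m (G : 'M[R]_(n, m)) : G^T *m G \in unitmx ->
  annmx G *m annmx G = annmx G.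
Proof.
move=> U; rewrite /annmx mulmxBl mul1mx mulmxBr mulmx1 projP //.
by rewrite subrr subr0.
Qed.

Lemma projann n m (G : 'M[R]_(n, m)) : G^T *m G \in unitmx ->
  projmx G *m annmx G = 0.
Proof. by move=> U; rewrite /annmx mulmxBr mulmx1 projP // subrr. Qed.

Lemma normal_eq n m (G : 'M[R]_(n, m)) (y : 'cV_n) : G^T *m G \in unitmx ->
  G^T *m (y - G *m (invmx (G^T *m G) *m G^T *m y)) = 0.
Proof.
move=> U; rewrite mulmxBr !mulmxA mulmxV // mul1mx subrr //.
Qed.

End Gen.

Lemma unit_inj (R : realFieldType) m (S : 'M[R]_m) (c : 'cV_m) :
  S \in unitmx -> S *m c = 0 -> c = 0.
Proof. by move=> U H; rewrite -[c]mul1mx -(mulVmx U) -mulmxA H mulmx0. Qed.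

Lemma unit_solve (R : realFieldType) m (S : 'M[R]_m) (c b : 'cV_m) :
  S \in unitmx -> S *m c = b -> c = invmx S *m b.
Proof. by move=> U <-; rewrite mulmxA mulVmx // mul1mx. Qed.

Lemma col0_eq (R : realFieldType) m1 m2 k (a : 'M[R]_(m1, k)) (b : 'M[R]_(m2, k)) :
  col_mx a b = 0 -> a = 0 /\ b = 0.
Proof. by rewrite -col_mx0 => /eq_col_mx. Qed.

Lemma trD (R : realFieldType) m k (a b : 'M[R]_(m,k)) : (a + b)^T = a^T + b^T.
Proof. by rewrite raddfD. Qed.
Lemma trB (R : realFieldType) m k (a b : 'M[R]_(m,k)) : (a - b)^T = a^T - b^T.
Proof. by rewrite raddfB. Qed.

Lemma ss_add (R : realFieldType) m (a b : 'cV[R]_m) : a^T *m b = 0 ->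
  (a + b)^T *m (a + b) = a^T *m a + b^T *m b.
Proof.
move=> H; have H' : b^T *m a = 0 by rewrite -[b^T *m a]trmxK trmx_mul trmxK H trmx0.
by rewrite trD mulmxDl !mulmxDr H H' addr0 add0r.
Qed.

Lemma wls_normal (R : realFieldType) m k (X : 'M[R]_(m,k)) (P : 'M[R]_m) (y : 'cV_m) :
  (X^T *m P *m X) \in unitmx ->
  X^T *m P *m (y - X *m (invmx (X^T *m P *m X) *m X^T *m P *m y)) = 0.
Proof.
move=> U; have -> : invmx (X^T *m P *m X) *m X^T *m P *m y
    = invmx (X^T *m P *m X) *m (X^T *m P *m y) by rewrite !mulmxA.
by rewrite mulmxBr (mulmxA (X^T *m P)) mulmxA mulmxV // mul1mx subrr.
Qed.

Lemma inv_identity (R : realFieldType) k (A B C : 'M[R]_k) :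
  A \in unitmx -> B \in unitmx -> C \in unitmx -> B = A + C ->
  (invmx A - invmx B) *m (B *m invmx C *m A) = 1%:M.
Proof.
move=> UA UB UC HB.
have h1 : invmx B *m (B *m invmx C *m A) = invmx C *m A.
  by rewrite !mulmxA mulVmx // mul1mx.
have h2 : invmx A *m (B *m invmx C *m A) = invmx C *m A + 1%:M.
  rewrite !mulmxA {1}HB mulmxDr mulVmx // !mulmxDl mul1mx -(mulmxA (invmx A) C).
  by rewrite mulmxV // mulmx1 mulVmx.
by rewrite mulmxBl h1 h2 addrC addKr.
Qed.

Lemma quad (R : realFieldType) k (A B C : 'M[R]_k) (d rho : 'cV_k) :
  C \in unitmx -> B^T = B -> C^T = C -> B = A + C -> C *m rho = B *m d ->
  rho^T *m (C *m rho - C *m d) = d^T *m (B *m invmx C *m A) *m d.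
Proof.
move=> UC BT CT HB E.
have Hr := unit_solve UC E.
rewrite E -mulmxBl {1}HB addrK {1}Hr !trmx_mul trmx_inv BT CT.
by rewrite !mulmxA.
Qed.

Lemma trz (R : realFieldType) m k (a : 'M[R]_(m, k)) (b : 'cV[R]_m) :
  a^T *m b = 0 -> b^T *m a = 0.
Proof. by move=> H; rewrite -[b^T *m a]trmxK trmx_mul trmxK H trmx0. Qed.

Lemma sqnormE (R : realFieldType) m (v : 'cV[R]_m) : sqnorm v = (v^T *m v) 0 0.
Proof. by rewrite /sqnorm mxE; apply: eq_bigr => i _; rewrite !mxE expr2. Qed.

Lemma entryD (R : realFieldType) m k (A B : 'M[R]_(m,k)) i j :
  (A + B) i j = A i j + B i j.
Proof. by rewrite mxE. Qed.

Lemma ff_abs (R : realFieldType) m k (V W : 'M[R]_(m,k)) (rho dd : 'cV[R]_k)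
  (A B C : 'M[R]_k) :
  C \in unitmx -> B^T = B -> C^T = C -> B = A + C ->
  V^T *m V = C -> V^T *m W = C -> W^T *m V = C -> W^T *m W = B ->
  W^T *m (V *m rho - W *m dd) = 0 ->
  (V *m rho - W *m dd)^T *m (V *m rho - W *m dd) = dd^T *m (B *m invmx C *m A) *m dd.
Proof.
move=> UC BT CT HB VV VW WV WW Wf.
have Crho : C *m rho = B *m dd.
  have := Wf; rewrite mulmxBr !mulmxA WV WW.
  by move/eqP; rewrite subr_eq0 => /eqP.
rewrite trB mulmxBl !trmx_mul -(mulmxA dd^T W^T) Wf mulmx0 subr0.
rewrite -(mulmxA rho^T V^T) mulmxBr (mulmxA V^T V) (mulmxA V^T W) VV VW.
exact: quad.
Qed.

Lemma entryZ (R : realFieldType) m k (a : R) (A : 'M[R]_(m,k)) i j :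
  (a *: A) i j = a * A i j.
Proof. by rewrite mxE. Qed.

Section Main.
Variables (R : realFieldType) (n k1 p1 p2 : nat) (Y1 : 'M[R]_(n,k1))
  (Y2 : 'cV[R]_n) (Z1 : 'M[R]_(n,p1)) (Z2 : 'M[R]_(n,p2)).
Local Notation Z := (Zmat Z1 Z2).
Local Notation X := (Xmat Y1 Z1).
Local Notation V := (Vhat Y1 Z1 Z2).
Local Notation P := (projmx Z).
Local Notation M := (annmx Z).
Local Notation P1 := (projmx Z1).
Local Notation M1 := (annmx Z1).
Hypotheses (hZ : Z^T *m Z \in unitmx) (hX : X^T *m X \in unitmx)
  (hXPX : X^T *m P *m X \in unitmx)
  (hXV : (XV Y1 Z1 Z2)^T *m XV Y1 Z1 Z2 \in unitmx).

Lemma hZ1 : Z1^T *m Z1 \in unitmx.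
Proof.
apply: gram_unit => w Hw.
have : X *m col_mx 0 w = 0 by rewrite /Xmat mul_row_col mulmx0 add0r Hw.
by move/(gram_inj hX)/col0_eq => [].
Qed.

Lemma PZ1 : P *m Z1 = Z1.
Proof.
have H := projG hZ; rewrite {2 3}/Zmat mul_mx_row in H.
by case/eq_row_mx: H.
Qed.

Lemma MZ1 : M *m Z1 = 0.
Proof. by rewrite /annmx mulmxBl mul1mx PZ1 subrr. Qed.

Lemma PP1 : P *m P1 = P1.
Proof. by rewrite [P1]/projmx !mulmxA PZ1. Qed.

Lemma P1P : P1 *m P = P1.
Proof. by rewrite -{1}(projT Z1) -(projT Z) -trmx_mul PP1 projT. Qed.

Lemma M1M : M1 *m M = M.
Proof. by rewrite /annmx mulmxBl mul1mx mulmxBr mulmx1 P1P (subrr P1) subr0. Qed.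

Lemma MM1 : M *m M1 = M.
Proof. by rewrite /annmx mulmxBl mul1mx mulmxBr mulmx1 PP1 opprB addrA subrK. Qed.

Lemma PM1P : P *m M1 *m P = P - P1.
Proof. by rewrite /annmx mulmxBr mulmx1 mulmxBl PP1 projP // P1P. Qed.


Local Notation A0 := ((Y1hat Y1 Z1 Z2)^T *m M1 *m Y1hat Y1 Z1 Z2).
Local Notation B := (Y1^T *m M1 *m Y1).
Local Notation C := (Y1^T *m M *m Y1).
Local Notation W := (M1 *m Y1).

Lemma Aeq : A0 = Y1^T *m (P - P1) *m Y1.
Proof. by rewrite /Y1hat trmx_mul projT -PM1P !mulmxA. Qed.

Lemma BAC : B = A0 + C.
Proof.
rewrite Aeq -mulmxDl -mulmxDr; congr (_ *m _ *m _).
by rewrite /annmx [RHS]addrC [RHS]addrA subrK.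
Qed.

Lemma BT : B^T = B.
Proof. by rewrite !trmx_mul trmxK annT mulmxA. Qed.
Lemma CT : C^T = C.
Proof. by rewrite !trmx_mul trmxK annT mulmxA. Qed.

Lemma WtW : W^T *m W = B.
Proof. by rewrite trmx_mul annT !mulmxA -(mulmxA _ M1 M1) annP ?hZ1. Qed.
Lemma VtV : V^T *m V = C.
Proof. by rewrite /Vhat trmx_mul annT !mulmxA -(mulmxA _ M M) annP. Qed.
Lemma WtV : W^T *m V = C.
Proof. by rewrite /Vhat trmx_mul annT !mulmxA -(mulmxA _ M1 M) M1M. Qed.
Lemma VtW : V^T *m W = C.
Proof. by rewrite /Vhat trmx_mul annT !mulmxA -(mulmxA _ M M1) MM1. Qed.

Lemma hB : B \in unitmx.
Proof.
rewrite -WtW; apply: gram_unit => w Hw.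
have : X *m col_mx w (- (invmx (Z1^T *m Z1) *m Z1^T *m Y1 *m w)) = 0.
  rewrite -Hw /Xmat mul_row_col mulmxN /annmx mulmxBl mul1mx mulmxBl /projmx.
  by rewrite !mulmxA.
by move/(gram_inj hX)/col0_eq => [].
Qed.

Lemma hA : A0 \in unitmx.
Proof.
have -> : A0 = (M1 *m Y1hat Y1 Z1 Z2)^T *m (M1 *m Y1hat Y1 Z1 Z2).
  by rewrite (trmx_mul M1) annT !mulmxA -(mulmxA _ M1 M1) annP ?hZ1.
apply: gram_unit => w Hw.
set c := col_mx w (- (invmx (Z1^T *m Z1) *m Z1^T *m Y1hat Y1 Z1 Z2 *m w)).
have H1 : P *m X *m c = 0.
  rewrite -Hw /Xmat mul_mx_row mul_row_col PZ1 mulmxN /annmx mulmxBl mul1mx.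
  by rewrite mulmxBl /projmx /Y1hat !mulmxA.
have : (X^T *m P *m X) *m c = 0.
  have -> : (X^T *m P *m X) *m c = X^T *m (P *m X *m c) by rewrite !mulmxA.
  by rewrite H1 mulmx0.
by move/(unit_inj hXPX)/col0_eq => [].
Qed.

Lemma hC : C \in unitmx.
Proof.
rewrite -VtV; apply: gram_unit => w Hw.
have : XV Y1 Z1 Z2 *m col_mx 0 w = 0 by rewrite /XV mul_row_col mulmx0 add0r Hw.
by move/(gram_inj hXV)/col0_eq => [].
Qed.


Local Notation th_o := (theta_ols Y1 Y2 Z1).
Local Notation th_2 := (theta_2sls Y1 Y2 Z1 Z2).
Local Notation th_c := (theta_cf Y1 Y2 Z1 Z2).
Local Notation rho := (rho_cf Y1 Y2 Z1 Z2).
Local Notation eo := (Y2 - X *m th_o).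
Local Notation e2 := (Y2 - X *m th_2).
Local Notation eu := (Y2 - X *m th_c - V *m rho).

Lemma Xeo : X^T *m eo = 0.
Proof. exact: normal_eq. Qed.

Lemma Xe2 : X^T *m P *m e2 = 0.
Proof. exact: wls_normal. Qed.

Lemma cf_split : X^T *m eu = 0 /\ V^T *m eu = 0.
Proof.
have H : (XV Y1 Z1 Z2)^T *m (Y2 - XV Y1 Z1 Z2 *m coef_cf Y1 Y2 Z1 Z2) = 0.
  exact: normal_eq.
have E : XV Y1 Z1 Z2 *m coef_cf Y1 Y2 Z1 Z2 = X *m th_c + V *m rho.
  by rewrite /theta_cf /rho_cf -{1}(vsubmxK (coef_cf Y1 Y2 Z1 Z2)) /XV mul_row_col.
have -> : eu = Y2 - XV Y1 Z1 Z2 *m coef_cf Y1 Y2 Z1 Z2 by rewrite E opprD addrA.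
apply: col0_eq; rewrite -mul_col_mx -tr_row_mx; exact: H.
Qed.

Lemma thc_eq : th_c = th_2.
Proof.
have [Xu Vu] := cf_split.
have PV : P *m V = 0 by rewrite /Vhat (mulmxA P) projann // mul0mx.
have MX : M *m X = row_mx V 0 by rewrite /Xmat mul_mx_row MZ1.
have XPeu : X^T *m P *m eu = 0.
  have -> : P = 1%:M - M by rewrite /annmx opprB addrC subrK.
  rewrite (mulmxBr X^T) mulmx1 (mulmxBl X^T) Xu.
  rewrite -(annT Z) -trmx_mul MX tr_row_mx mul_col_mx Vu trmx0 mul0mx col_mx0.
  by rewrite subrr.
have E : X^T *m P *m (Y2 - X *m th_c) = 0.
  have -> : Y2 - X *m th_c = eu + V *m rho by rewrite subrK.
  by rewrite mulmxDr XPeu add0r (mulmxA (X^T *m P)) -(mulmxA X^T) PV mulmx0 mul0mx.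
have E2 : (X^T *m P *m X) *m th_c = X^T *m P *m Y2.
  by apply/eqP; rewrite eq_sym -subr_eq0 -(mulmxA (X^T *m P) X) -mulmxBr E.
by rewrite (unit_solve hXPX E2) /theta_2sls !mulmxA.
Qed.


Lemma split0 (e : 'cV_n) : X^T *m e = 0 -> Y1^T *m e = 0 /\ Z1^T *m e = 0.
Proof. by move=> H; apply: col0_eq; rewrite -mul_col_mx -tr_row_mx. Qed.

Lemma We0 (e : 'cV_n) : X^T *m e = 0 -> W^T *m e = 0.
Proof.
move=> /split0 [Y1e Z1e].
have P1e : P1 *m e = 0 by rewrite /projmx -mulmxA Z1e mulmx0.
by rewrite trmx_mul annT -(mulmxA Y1^T M1 e) /annmx mulmxBl mul1mx P1e subr0.
Qed.

Local Notation d := (beta_ols Y1 Y2 Z1 - beta_2sls Y1 Y2 Z1 Z2).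

Lemma Xd : X *m (th_o - th_2) = W *m d.
Proof.
have E1 : X *m (th_o - th_2) = e2 - eo.
  by rewrite mulmxBr [in RHS]opprB [in RHS]addrC [in RHS]addrA subrK.
have ZP : Z1^T *m P = Z1^T by rewrite -(projT Z) -trmx_mul PZ1.
have Z2e : Z1^T *m e2 = 0.
  have := Xe2; rewrite -mulmxA => /split0 [_]; by rewrite mulmxA ZP.
have [_ Zoe] := split0 Xeo.
have Zd : Z1^T *m (X *m (th_o - th_2)) = 0 by rewrite E1 mulmxBr Z2e Zoe subrr.
have P1d : P1 *m (X *m (th_o - th_2)) = 0 by rewrite /projmx -mulmxA Zd mulmx0.
have M1X : M1 *m X = row_mx W 0 by rewrite /Xmat mul_mx_row (annG hZ1).
have -> : X *m (th_o - th_2) = M1 *m (X *m (th_o - th_2)).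
  by rewrite /annmx mulmxBl mul1mx P1d subr0.
rewrite mulmxA M1X -{1}(vsubmxK (th_o - th_2)) mul_row_col mul0mx addr0.
congr (_ *m _); apply/matrixP => i j; rewrite /beta_ols /beta_2sls !mxE.
by [].
Qed.


Local Notation N := (B *m invmx C *m A0).

Lemma Ee2 : e2 = eo + W *m d.
Proof. by rewrite -Xd mulmxBr addrA subrK. Qed.

Lemma KeyB : sqnorm e2 = sqnorm eo + (d^T *m B *m d) 0 0.
Proof.
have H2 : (W *m d)^T *m (W *m d) = d^T *m B *m d.
  by rewrite trmx_mul -(mulmxA d^T W^T) (mulmxA W^T W d) WtW mulmxA.
rewrite !sqnormE Ee2 ss_add; first by rewrite H2 entryD.
by rewrite mulmxA (trz (We0 Xeo)) mul0mx.
Qed.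

Lemma KeyA : sqnorm eo = sqnorm eu + (d^T *m N *m d) 0 0.
Proof.
have thc := thc_eq.
have [Xu Vu] := cf_split.
have Ee : eo = eu + (V *m rho - W *m d).
  by rewrite thc addrA subrK Ee2 addrK.
have Ef : V *m rho - W *m d = eo - eu by rewrite Ee [in RHS]addrC addKr.
have Wf : W^T *m (V *m rho - W *m d) = 0.
  by rewrite Ef mulmxBr (We0 Xeo) (We0 Xu) subrr.
have ff := ff_abs hC BT CT BAC VtV VtW WtV WtW Wf.
rewrite !sqnormE Ee ss_add; first by rewrite ff entryD.
rewrite mulmxBr (mulmxA _ V) (mulmxA _ W) (trz Vu) (trz (We0 Xu)) !mul0mx.
by rewrite subrr.
Qed.

Lemma KeyInv (s : R) : s != 0 -> invmx (tH_mid Y1 Z1 Z2 s s) = s^-1 *: N.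
Proof.
move=> s0; apply: invmx_eq; rewrite /tH_mid -scalerBr -scalemxAl -scalemxAr.
by rewrite scalerA mulfV // scale1r; exact: inv_identity hA hB hC BAC.
Qed.


Lemma final :
  0 < sigma2_u Y1 Y2 Z1 Z2 ->
  0 < sigma2_ols Y1 Y2 Z1 ->
  0 < sigma2_2sls Y1 Y2 Z1 Z2 ->
  sigma2_u Y1 Y2 Z1 Z2 = sigma2_ols Y1 Y2 Z1 * (1 - tH1 Y1 Y2 Z1 Z2 / n%:R) /\
  sigma2_u Y1 Y2 Z1 Z2 =
    sigma2_2sls Y1 Y2 Z1 Z2 * (1 - tH2 Y1 Y2 Z1 Z2 / n%:R - Hn Y1 Y2 Z1 Z2).
Proof.
move=> hu ho h2.
have n0 : n%:R != 0 :> R.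
  by apply/eqP => H; move: ho; rewrite /sigma2_ols H invr0 mul0r ltxx.
have so0 : sigma2_ols Y1 Y2 Z1 != 0 by rewrite gt_eqF.
have s20 : sigma2_2sls Y1 Y2 Z1 Z2 != 0 by rewrite gt_eqF.
rewrite /tH1 /tH2 /tH /Hn !KeyInv // -!scalemxAr -!scalemxAl !entryZ.
move: so0 s20; rewrite /sigma2_u /sigma2_ols /sigma2_2sls KeyB KeyA.
set u := sqnorm _; set q := (_ *m _) 0 0; set D := (_ *m _) 0 0.
move=> so0 s20; split; field; rewrite n0 /=; apply/eqP => E.
  by move: so0; rewrite E mulr0 eqxx.
by move: s20; rewrite E mulr0 eqxx.
Qed.

End Main.
Theorem lemma2 (R : realFieldType) (n k1 p1 p2 : nat)
  (Y1 : 'M[R]_(n, k1)) (Y2 : 'cV[R]_n) (Z1 : 'M[R]_(n, p1)) (Z2 : 'M[R]_(n, p2)) :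
  let Z := Zmat Z1 Z2 in
  let X := Xmat Y1 Z1 in
  (Z^T *m Z) \in unitmx ->
  (X^T *m X) \in unitmx ->
  (X^T *m projmx Z *m X) \in unitmx ->
  ((XV Y1 Z1 Z2)^T *m XV Y1 Z1 Z2) \in unitmx ->
  0 < sigma2_u Y1 Y2 Z1 Z2 ->
  0 < sigma2_ols Y1 Y2 Z1 ->
  0 < sigma2_2sls Y1 Y2 Z1 Z2 ->
  tH_mid Y1 Z1 Z2 (sigma2_ols Y1 Y2 Z1) (sigma2_ols Y1 Y2 Z1) \in unitmx ->
  tH_mid Y1 Z1 Z2 (sigma2_2sls Y1 Y2 Z1 Z2) (sigma2_2sls Y1 Y2 Z1 Z2) \in unitmx ->
  sigma2_u Y1 Y2 Z1 Z2 = sigma2_ols Y1 Y2 Z1 * (1 - tH1 Y1 Y2 Z1 Z2 / n%:R) /\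
  sigma2_u Y1 Y2 Z1 Z2 =
    sigma2_2sls Y1 Y2 Z1 Z2 * (1 - tH2 Y1 Y2 Z1 Z2 / n%:R - Hn Y1 Y2 Z1 Z2).
Proof.
move=> Z X hZ hX hXPX hXV hu ho h2 _ _.
exact: (final hZ hX hXPX hXV hu ho h2).
Qed.
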